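(* Let $(K_n,\Sigma)$ be a signed complete graph with $n\geq4$, and let $X(\Sigma)$ be the set of edges $vw$ of $K_n$ such that the triangle $uvw$ is even for every $u\in V(K_n)\setminus\{v,w\}$. Then there exists a signed complete graph $(K_k,\Sigma')$ with vertex set $\{v_1,\dots,v_k\}$ and complete graphs $H_1,\dots,H_k$ with $V(H_1),\dots,V(H_k)$ a partition of $V(K_n)$, such that $(K_n,\Sigma)$ is switching equivalent to the signed graph obtained from $(K_k,\Sigma')$ by substituting $v_i$ with $(H_i,\emptyset)$ for each $i\in[k]$, and $X(\Sigma)=\bigcup_{i=1}^kE(H_i)$.
   Context: A signed graph is a pair $(G,\Sigma)$ with $G$ a finite simple graph and $\Sigma\subseteq E(G)$ (odd edges; the others are even). A triangle $uvw$ is odd (resp. even) if $|\Sigma\cap\{uv,uw,vw\}|$ is odd (resp. even). Switching at a vertex $v$ replaces $\Sigma$ by $\Sigma\triangle\delta(v)$, where $\delta(v)$ is the set of edges incident with $v$; two signed graphs are switching equivalent if one is obtained from the other by a sequence of switchings. Substituting every vertex $v_i$ of $(K_k,\Sigma')$ with $(H_i,\emptyset)$ yields the signed complete graph on $\bigcup_iV(H_i)$ in which edges inside each $V(H_i)$ are even and every edge between $V(H_i)$ and $V(H_j)$ ($i\neq j$) is odd iff $v_iv_j\in\Sigma'$. *)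

(* Defs.v *)
From mathcomp Require Import all_boot.
Set Implicit Arguments. Unset Strict Implicit. Unset Printing Implicit Defensive.

Definition cedges (T : finType) : {set {set T}} := [set e : {set T} | #|e| == 2].

(* A signed complete graph (K_T, S): S is a set of edges (the odd edges). *)
Definition signed_complete (T : finType) (S : {set {set T}}) : Prop :=
  S \subset cedges T.

Definition odd_triangle (T : finType) (S : {set {set T}}) (u v w : T) : bool :=
  odd #|S :&: [set [set u; v]; [set u; w]; [set v; w]]|.

Definition delta (T : finType) (v : T) : {set {set T}} :=
  [set e in cedges T | v \in e].

Definition symdiff (T : finType) (A B : {set T}) : {set T} := (A :\: B) :|: (B :\: A).

Definition switch (T : finType) (S : {set {set T}}) (v : T) : {set {set T}} :=
  symdiff S (delta v).

Definition switching_equiv (T : finType) (S1 S2 : {set {set T}}) : Prop :=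
  exists s : seq T, foldl (@switch T) S1 s = S2.

Definition Xset (T : finType) (S : {set {set T}}) : {set {set T}} :=
  [set e in cedges T | [forall u, forall v, forall w,
     ((e == [set v; w]) && (u \notin e)) ==> ~~ odd_triangle S u v w]].

(* Substitution: vertex i of (K_k, S') replaced by the complete graph H_i with
   vertex set f^-1(i) (all edges even); edges between H_i and H_j (i <> j)
   are odd iff {i,j} is in S'. *)
Definition substitute (T : finType) (k : nat) (S' : {set {set 'I_k}})
  (f : T -> 'I_k) : {set {set T}} :=
  [set e in cedges T | [exists x, exists y,
     [&& e == [set x; y], f x != f y & [set f x; f y] \in S']]].

Definition block_edges (T : finType) (k : nat) (f : T -> 'I_k) (i : 'I_k)
  : {set {set T}} :=
  [set e in cedges T | e \subset f @^-1: [set i]].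

(* Main.v *)
Require Import Defs.
From mathcomp Require Import all_boot.
Set Implicit Arguments. Unset Strict Implicit. Unset Printing Implicit Defensive.

Lemma card_setIU1 (T : finType) (S B : {set T}) (x : T) :
  x \notin B -> #|S :&: (x |: B)| = (x \in S) + #|S :&: B|.
Proof.
move=> xB; case xS: (x \in S).
  have -> : S :&: (x |: B) = x |: (S :&: B).
    by apply/setP=> t; rewrite !inE; case: eqP => // ->; rewrite xS.
  by rewrite cardsU1 inE (negbTE xB) andbF.
have -> : S :&: (x |: B) = S :&: B.
  by apply/setP=> t; rewrite !inE; case: eqP => // ->; rewrite xS.
by [].
Qed.

Lemma card_setI1 (T : finType) (S : {set T}) (x : T) :
  #|S :&: [set x]| = (x \in S).
Proof.
case xS: (x \in S).
  have -> : S :&: [set x] = [set x].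
    by apply/setP=> t; rewrite !inE; case: (eqVneq t x) => [->|]; rewrite ?xS ?andbF ?andbT.
  by rewrite cards1.
have -> : S :&: [set x] = set0.
  by apply/setP=> t; rewrite !inE; case: (eqVneq t x) => [->|]; rewrite ?xS ?andbF ?andbT.
by rewrite cards0.
Qed.

Lemma odd_card3 (T : finType) (S : {set T}) (x y z : T) :
  x != y -> x != z -> y != z ->
  odd #|S :&: [set x; y; z]| = (x \in S) (+) (y \in S) (+) (z \in S).
Proof.
move=> xy xz yz.
have -> : [set x; y; z] = x |: (y |: [set z]) by apply/setP=> t; rewrite !inE orbA.
rewrite card_setIU1; last by rewrite !inE negb_or xy xz.
rewrite card_setIU1; last by rewrite !inE yz.
rewrite card_setI1 !oddD !oddb.
by case: (x \in S); case: (y \in S); case: (z \in S).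
Qed.

Definition sg (T : finType) (S : {set {set T}}) (a b : T) := [set a; b] \in S.
Definition tri (T : finType) (S : {set {set T}}) (u a b : T) :=
  sg S u a (+) sg S u b (+) sg S a b.

Lemma set2C (T : finType) (a b : T) : [set a; b] = [set b; a].
Proof. by rewrite setUC. Qed.

Lemma sgC (T : finType) (S : {set {set T}}) a b : sg S a b = sg S b a.
Proof. by rewrite /sg set2C. Qed.

Lemma set2_inj (T : finType) (a b c : T) : a != b -> [set a; b] = [set a; c] -> b = c.
Proof.
move=> ab E; have : b \in [set a; c] by rewrite -E !inE eqxx orbT.
by rewrite !inE eq_sym (negbTE ab) => /eqP.
Qed.


Lemma set2_cases (T : finType) (a b x y : T) : x != y -> [set x; y] = [set a; b] ->
  (x = a /\ y = b) \/ (x = b /\ y = a).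
Proof.
move=> xy E.
have : x \in [set a; b] by rewrite -E !inE eqxx.
have : y \in [set a; b] by rewrite -E !inE eqxx orbT.
rewrite !inE => /orP[]/eqP Ey /orP[]/eqP Ex; subst; rewrite ?eqxx in xy; auto; done.
Qed.
Lemma odd_triE (T : finType) (S : {set {set T}}) u a b :
  u != a -> u != b -> a != b -> odd_triangle S u a b = tri S u a b.
Proof.
move=> ua ub ab; rewrite /odd_triangle odd_card3 //.
- by apply/eqP=> /(set2_inj ua) E; rewrite E eqxx in ab.
- apply/eqP=> E; have : u \in [set a; b] by rewrite -E !inE eqxx.
  by rewrite !inE (negbTE ua) (negbTE ub).
- apply/eqP; rewrite (set2C u b) (set2C a b).
  have bu : b != u by rewrite eq_sym.
  by move=> /(set2_inj bu) E; rewrite E eqxx in ua.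
Qed.

Definition ex (T : finType) (S : {set {set T}}) (a b : T) :=
  (a != b) && [forall u, ((u != a) && (u != b)) ==> ~~ tri S u a b].
Definition eqv (T : finType) (S : {set {set T}}) (a b : T) := (a == b) || ex S a b.

Lemma triC (T : finType) (S : {set {set T}}) u a b : tri S u a b = tri S u b a.
Proof. by rewrite /tri (sgC S a b); case: (sg S u a); case: (sg S u b). Qed.

Lemma exC (T : finType) (S : {set {set T}}) a b : ex S a b = ex S b a.
Proof.
rewrite /ex eq_sym; congr (_ && _); apply/eq_forallb=> u.
by rewrite andbC triC.
Qed.

Lemma eqv_refl (T : finType) (S : {set {set T}}) a : eqv S a a.
Proof. by rewrite /eqv eqxx. Qed.

Lemma eqv_sym (T : finType) (S : {set {set T}}) a b : eqv S a b = eqv S b a.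
Proof. by rewrite /eqv eq_sym exC. Qed.

Lemma eqv_trans (T : finType) (S : {set {set T}}) a b c :
  eqv S a b -> eqv S b c -> eqv S a c.
Proof.
move=> /orP[/eqP->//|hab] /orP[/eqP<-|hbc]; first by rewrite /eqv hab orbT.
case: (eqVneq a c) => [->|ac]; first exact: eqv_refl.
apply/orP; right; apply/andP; split=> //.
move/andP: hab => [ab /forallP Hab]; move/andP: hbc => [bc /forallP Hbc].
apply/forallP=> u; apply/implyP=> /andP[ua uc].
case: (eqVneq u b) => [->|ub].
  have := Hab c; rewrite eq_sym ac eq_sym bc /=.
  rewrite /tri (sgC S c a) (sgC S c b) (sgC S b a).
  by case: (sg S a b); case: (sg S b c); case: (sg S a c).
have := Hab u; rewrite ua ub /= => H1.
have := Hbc u; rewrite ub uc /= => H2.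
have := Hbc a; rewrite ab ac /= => H3.
move: H1 H2 H3; rewrite /tri.
by case: (sg S u a); case: (sg S u b); case: (sg S u c); case: (sg S a b);
   case: (sg S a c); case: (sg S b c).
Qed.

Lemma Xset_mem (T : finType) (S : {set {set T}}) a b :
  a != b -> ([set a; b] \in Xset S) = ex S a b.
Proof.
move=> ab; rewrite /Xset inE /cedges inE cards2 ab /= /ex ab /=.
apply/forallP/forallP.
  move=> H u; apply/implyP=> /andP[ua ub].
  have := H u; move/forallP/(_ a)/forallP/(_ b)/implyP.
  rewrite eqxx !inE negb_or ua ub /= => /(_ isT).
  by rewrite odd_triE // eq_sym.
move=> H u; apply/forallP=> v; apply/forallP=> w; apply/implyP=> /andP[/eqP E].
have vw : v != w.
  by apply/negP=> /eqP vw; have := cards2 a b; rewrite ab E vw setUid cards1.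
rewrite !inE negb_or => /andP[ua ub].
have := H u; rewrite ua ub /= => Ht.
case: (set2_cases vw (esym E)) => [[-> ->]|[-> ->]].
  by rewrite odd_triE // eq_sym.
by rewrite odd_triE 1?triC // eq_sym.
Qed.

Lemma switch_mem (T : finType) (S : {set {set T}}) v e :
  (e \in switch S v) = (e \in S) (+) ((e \in cedges T) && (v \in e)).
Proof.
rewrite /switch /symdiff /delta /cedges !inE.
by case: (e \in S); case: (#|e| == 2); case: (v \in e).
Qed.

Lemma foldl_switch_mem (T : finType) (s : seq T) (S : {set {set T}}) e :
  (e \in foldl (@switch T) S s) =
  (e \in S) (+) ((e \in cedges T) && odd (count (fun v => v \in e) s)).
Proof.
elim: s S => [|v s IH] S /=; first by rewrite andbF addbF.
rewrite IH switch_mem oddD oddb.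
by case: (e \in S); case: (e \in cedges T); case: (v \in e); case: (odd _).
Qed.

Lemma count_set2 (T : finType) (A : {set T}) a b : a != b ->
  count (fun v => v \in [set a; b]) (enum A) = (a \in A) + (b \in A).
Proof.
move=> ab.
have -> : count (fun v => v \in [set a; b]) (enum A) =
          count (predU (pred1 a) (pred1 b)) (enum A).
  by apply: eq_count=> v; rewrite !inE.
have E : count (predI (pred1 a) (pred1 b)) (enum A) = count pred0 (enum A).
  by apply: eq_count=> v /=; case: (eqVneq v a) => // ->; rewrite (negbTE ab).
have := count_predUI (pred1 a) (pred1 b) (enum A).
by rewrite E count_pred0 addn0 !count_uniq_mem ?enum_uniq // !mem_enum.
Qed.

Definition cls (T : finType) (S : {set {set T}}) a := [set b | eqv S a b].
Definition rep (T : finType) (S : {set {set T}}) a := odflt a [pick b in cls S a].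

Lemma rep_eqv (T : finType) (S : {set {set T}}) a : eqv S a (rep S a).
Proof.
rewrite /rep; case: pickP => [b|H] /=; first by rewrite inE.
exact: eqv_refl.
Qed.

Lemma cls_eq (T : finType) (S : {set {set T}}) a b : eqv S a b -> cls S a = cls S b.
Proof.
move=> h; apply/setP=> c; rewrite !inE; apply/idP/idP => h2.
  by apply: eqv_trans h2; rewrite eqv_sym.
exact: eqv_trans h2.
Qed.

Lemma rep_eq (T : finType) (S : {set {set T}}) a b : eqv S a b -> rep S a = rep S b.
Proof.
move=> h; rewrite /rep (cls_eq h); case: pickP => [c|H] //=.
by have := H b; rewrite inE eqv_refl.
Qed.

Lemma eqv_rep (T : finType) (S : {set {set T}}) a b : eqv S a b = (rep S a == rep S b).
Proof.
apply/idP/eqP; first exact: rep_eq.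
move=> E; apply: (eqv_trans (rep_eqv S a)); rewrite E eqv_sym; exact: rep_eqv.
Qed.

Lemma rep_idem (T : finType) (S : {set {set T}}) a : rep S (rep S a) = rep S a.
Proof. by apply: rep_eq; rewrite eqv_sym; apply: rep_eqv. Qed.

Definition swA (T : finType) (S : {set {set T}}) :=
  [set v | (rep S v != v) && sg S (rep S v) v].
Definition S2 (T : finType) (S : {set {set T}}) := foldl (@switch T) S (enum (swA S)).

Lemma sg2E (T : finType) (S : {set {set T}}) a b : a != b ->
  sg (S2 S) a b = sg S a b (+) (a \in swA S) (+) (b \in swA S).
Proof.
move=> ab; rewrite /sg /S2 foldl_switch_mem count_set2 // oddD !oddb.
have -> : [set a; b] \in cedges T by rewrite inE cards2 ab.
by rewrite /= addbA.
Qed.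

Lemma tri2 (T : finType) (S : {set {set T}}) u a b :
  u != a -> u != b -> a != b -> tri (S2 S) u a b = tri S u a b.
Proof.
move=> ua ub ab; rewrite /tri !sg2E //.
by case: (sg S u a); case: (sg S u b); case: (sg S a b);
   case: (u \in swA S); case: (a \in swA S); case: (b \in swA S).
Qed.

Lemma in_block (T : finType) (S : {set {set T}}) a b :
  a != b -> eqv S a b -> sg (S2 S) a b = false.
Proof.
move=> ab h.
set r := rep S a.
have C : forall v, rep S v = r -> v != r -> sg (S2 S) r v = false.
  move=> v rv vr; rewrite sg2E 1?eq_sym // !inE rep_idem eqxx /= rv eq_sym vr /=.
  by case: (sg S r v).
have rb : rep S b = r by rewrite /r (rep_eq h).
case: (eqVneq a r) => [ar|ar].
  by rewrite ar; apply: C => //; rewrite -ar eq_sym.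
case: (eqVneq b r) => [br|br].
  by rewrite sgC br; apply: C.
have hex : ex S a b by move: h; rewrite /eqv (negbTE ab).
move/andP: hex => [_ /forallP /(_ r)].
rewrite eq_sym ar eq_sym br /= -tri2 1?eq_sym // 1?eq_sym //.
by rewrite /tri !C //; case: (sg _ a b).
Qed.

Lemma move1 (T : finType) (S : {set {set T}}) a a' b :
  eqv S a a' -> ~~ eqv S a b -> sg (S2 S) a b = sg (S2 S) a' b.
Proof.
move=> h nh; case: (eqVneq a a') => [<-//|aa].
have hex : ex S a a' by move: h; rewrite /eqv (negbTE aa).
have ba : b != a by apply: contraNneq nh => ->; apply: eqv_refl.
have ba' : b != a'.
  by apply: contraNneq nh => ->; exact: h.
move/andP: hex => [_ /forallP /(_ b)].
rewrite ba ba' /= -tri2 // /tri (in_block aa h) (sgC _ a b) (sgC _ a' b).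
by case: (sg (S2 S) b a); case: (sg (S2 S) b a').
Qed.

Lemma cross (T : finType) (S : {set {set T}}) a b :
  ~~ eqv S a b -> sg (S2 S) a b = sg (S2 S) (rep S a) (rep S b).
Proof.
move=> nh; rewrite (move1 (rep_eqv S a) nh) sgC.
have nh' : ~~ eqv S b (rep S a).
  apply: contra nh => h'; rewrite eqv_sym; apply: eqv_trans h' _.
  by rewrite eqv_sym; apply: rep_eqv.
by rewrite (move1 (rep_eqv S b) nh') sgC.
Qed.

Lemma in_set2_cases (T : finType) (a b x : T) : x \in [set a; b] -> x = a \/ x = b.
Proof. by rewrite !inE => /orP[]/eqP; auto. Qed.

Lemma main_gen (T : finType) (x0 : T) (S : {set {set T}}) :
  signed_complete S ->
  exists (k : nat) (S' : {set {set 'I_k}}) (f : T -> 'I_k),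
    [/\ signed_complete S',
        (forall i : 'I_k, exists x : T, f x = i),
        switching_equiv S (substitute S' f)
      & Xset S = \bigcup_(i < k) block_edges f i].
Proof.
move=> HS.
pose R := [set rep S v | v : T].
have x0R : rep S x0 \in R by apply/imsetP; exists x0.
pose f := fun v => enum_rank_in x0R (rep S v).
pose g := fun i : 'I_#|R| => (enum_val i : T).
have gR : forall i, g i \in R by move=> i; apply: enum_valP.
have fg : forall i, f (g i) = i.
  move=> i; have rg : rep S (g i) = g i.
    by have := gR i => /imsetP [v _ ->]; rewrite rep_idem.
  by rewrite /f rg /g enum_valK_in.
have gf : forall v, g (f v) = rep S v.
  by move=> v; rewrite /g /f enum_rankK_in //; apply/imsetP; exists v.
have feq : forall x y, (f x == f y) = eqv S x y.
  move=> x y; rewrite eqv_rep; apply/eqP/eqP => [E|E]; last by rewrite /f E.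
  by rewrite -(gf x) -(gf y) E.
pose S' := [set e in cedges 'I_#|R| | [exists i, exists j,
              [&& e == [set i; j], i != j & sg (S2 S) (g i) (g j)]]].
exists #|R|, S', f; split.
- by apply/subsetP=> e; rewrite inE => /andP[].
- by move=> i; exists (g i); apply: fg.
- exists (enum (swA S)); apply/setP=> e.
  change ((e \in S2 S) = (e \in substitute S' f)).
  case ce: (e \in cedges T); last first.
    rewrite /S2 foldl_switch_mem ce /= addbF /substitute inE ce /=.
    by apply/negP => /(subsetP HS); rewrite ce.
  move: ce; rewrite inE => /cards2P [a [b [ab ->]]].
  change (sg (S2 S) a b = ([set a; b] \in substitute S' f)); rewrite /substitute inE /cedges inE cards2 ab /=.
  case: (boolP (eqv S a b)) => h.
    rewrite in_block //; symmetry; apply/negbTE/negP => /existsP [x /existsP [y /and3P [/eqP E fxy _]]].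
    have hx : eqv S x a.
      have : x \in [set a; b] by rewrite E !inE eqxx.
      by case/in_set2_cases => ->; [apply: eqv_refl | rewrite eqv_sym].
    have hy : eqv S a y.
      have : y \in [set a; b] by rewrite E !inE eqxx orbT.
      by case/in_set2_cases => ->; [apply: eqv_refl | ].
    by move: fxy; rewrite feq (eqv_trans hx hy).
  have fab : f a != f b by rewrite feq.
  rewrite cross //.
  have -> : sg (S2 S) (rep S a) (rep S b) = ([set f a; f b] \in S').
    rewrite inE /cedges inE cards2 fab /=; apply/idP/existsP.
      move=> H; exists (f a); apply/existsP; exists (f b).
      by rewrite eqxx fab /= !gf.
    move=> [i /existsP [j /and3P [/eqP E ij H]]].
    case: (set2_cases ij (esym E)) => [[Ei Ej]|[Ei Ej]]; move: H; rewrite Ei Ej !gf //.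
    by rewrite sgC.
  apply/idP/existsP.
    by move=> H; exists a; apply/existsP; exists b; rewrite eqxx fab H.
  move=> [x /existsP [y /and3P [/eqP E fxy H]]].
  have xy : x != y by apply: contraNneq fxy => ->.
  case: (set2_cases xy (esym E)) => [[Ex Ey]|[Ex Ey]]; move: H; rewrite Ex Ey //.
  by rewrite set2C.
- apply/setP=> e.
  case ce: (e \in cedges T); last first.
    rewrite /Xset inE ce /=; symmetry; apply/negbTE/negP => /bigcupP [i _].
    by rewrite /block_edges inE ce.
  move: ce; rewrite inE => /cards2P [a [b [ab ->]]].
  rewrite Xset_mem //.
  have -> : ex S a b = eqv S a b by rewrite /eqv (negbTE ab).
  apply/idP/bigcupP.
    move=> h; exists (f a) => //; rewrite /block_edges inE /cedges inE cards2 ab /=.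
    apply/subsetP => v /in_set2_cases [->|->]; rewrite !inE //.
    by rewrite feq eqv_sym.
  move=> [i _]; rewrite /block_edges inE => /andP [_ /subsetP H].
  have := H a; have := H b; rewrite !inE !eqxx ?orbT => /(_ isT)/eqP fb /(_ isT)/eqP fa.
  by rewrite -feq fa fb.
Qed.

Theorem lemma3p7 (n : nat) (S : {set {set 'I_n}}) :
  4 <= n -> signed_complete S ->
  exists (k : nat) (S' : {set {set 'I_k}}) (f : 'I_n -> 'I_k),
    [/\ signed_complete S',
        (forall i : 'I_k, exists x : 'I_n, f x = i),
        switching_equiv S (substitute S' f)
      & Xset S = \bigcup_(i < k) block_edges f i].
Proof.
move=> n4 HS.
have n0 : 0 < n by apply: leq_trans n4.
exact: (main_gen (Ordinal n0) HS).
Qed.
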